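(* Let $(X,w)$ be the Euclidean tight $6$-design of $\mathbb{R}^{22}$ with $X=X_1\cup X_2$, where $X_1$ ($275$ points) lies on the unit sphere and $X_2$ ($2025$ points) lies on the sphere of radius $\sqrt{11}$ centered at the origin. Put $a_1=\frac{2}{\sqrt5}$, $b_1=\frac1{\sqrt5}$, $a_2=\frac{2}{3\sqrt5}$, $b_2=\frac{1}{3\sqrt5}$ and define subsets of $\mathbb{R}^{23}=\mathbb{R}^{22}\times\mathbb{R}$: $Z_{\pm1}=\{\pm(a_1x,b_1):x\in X_1\}$, $Z_{\pm2}=\{\pm(a_2x,b_2):x\in X_2\}$. Then $Z=Z_{+1}\cup Z_{+2}\cup Z_{-1}\cup Z_{-2}$ consists of $4600$ points on the unit sphere $S^{22}$ and is a spherical tight $7$-design.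
   Context: A Euclidean tight $6$-design of $\mathbb{R}^{22}$ is a weighted finite set $(X,w)$, $w>0$, supported by concentric spheres $S_i$ centered at the origin, $X_i=X\cap S_i$, $w(X_i)=\sum_{x\in X_i}w(x)$, with $\sum_i\frac{w(X_i)}{|S_i|}\int_{S_i}f\,d\sigma_i=\sum_{x\in X}w(x)f(x)$ for all polynomials $f$ of degree at most $6$ and $|X|=\binom{25}{3}=2300$; such a design with $|X_1|=275$ exists, is unique up to similarity, and has radius ratio $\sqrt{11}$. A spherical $t$-design is a finite nonempty $Z\subset S^{d-1}$ such that the average of $f$ over $Z$ equals its average over $S^{d-1}$ for every polynomial $f$ of degree at most $t$; a spherical $(2e+1)$-design in $S^{d-1}$ has at least $2\binom{d+e-1}{e}$ points, and it is tight if equality holds (for $d=23$, $e=3$ this number is $4600$). *)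

(* Defs.v *)
From HB Require Import structures.
From mathcomp Require Import all_boot all_order all_algebra.
Set Implicit Arguments. Unset Strict Implicit. Unset Printing Implicit Defensive.
Import Order.TTheory GRing.Theory Num.Theory.
Local Open Scope ring_scope.

Section Defs.
Variable R : rcfType.
Variable d : nat.

Definition mexp := {ffun 'I_d -> nat}.
Definition mdeg (a : mexp) : nat := (\sum_(i < d) a i)%N.

(* a polynomial in d variables: finite list of (coefficient, monomial) *)
Definition mpoly := seq (R * mexp).
Definition mono_eval (a : mexp) (x : 'rV[R]_d) : R := \prod_(i < d) x ord0 i ^+ a i.
Definition peval (p : mpoly) (x : 'rV[R]_d) : R := \sum_(m <- p) m.1 * mono_eval m.2 x.
Definition pdeg_le (p : mpoly) (t : nat) : bool := all (fun m => (mdeg m.2 <= t)%N) p.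

(* double factorial n!! (with 0!! = 1!! = 1) *)
Fixpoint dfact (n : nat) : nat :=
  match n with 0 | 1 => 1%N | (k.+2) as m => (m * dfact k)%N end.

(* normalized surface-measure average over the unit sphere S^{d-1} of x^a:
   0 unless all exponents even, otherwise prod (a_i - 1)!! / (d (d+2) ... (d+|a|-2)) *)
Definition sphere_mono_avg (a : mexp) : R :=
  if [forall i, ~~ odd (a i)]
  then (\prod_(i < d) dfact (a i).-1)%:R / \prod_(j < (mdeg a)./2) (d + 2 * j)%:R
  else 0.

(* (1/|S_r|) * integral over the sphere of radius r of p = average of u |-> p(r u) over S^{d-1} *)
Definition sphere_avg_r (r : R) (p : mpoly) : R :=
  \sum_(m <- p) m.1 * r ^+ mdeg m.2 * sphere_mono_avg m.2.

Definition sqnorm (x : 'rV[R]_d) : R := \sum_(i < d) x ord0 i ^+ 2.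
Definition on_sphere (r : R) (x : 'rV[R]_d) : bool := sqnorm x == r ^+ 2.

Definition spherical_design (t : nat) (Z : seq 'rV[R]_d) : Prop :=
  [/\ Z != [::], uniq Z, all (on_sphere 1) Z &
      forall p : mpoly, pdeg_le p t ->
        (\sum_(z <- Z) peval p z) / (size Z)%:R = sphere_avg_r 1 p].

Definition tight_spherical_design (e : nat) (Z : seq 'rV[R]_d) : Prop :=
  spherical_design (2 * e + 1) Z /\ size Z = (2 * 'C(d + e - 1, e))%N.

(* Euclidean t-design: S is the list of (radius r_i, X_i), X = union of the X_i *)
Definition euclidean_design (t : nat) (S : seq (R * seq 'rV[R]_d))
    (w : 'rV[R]_d -> R) : Prop :=
  let X := flatten (map snd S) in
  [/\ uniq X, uniq (map fst S) && all (fun s => 0 <= s.1) S,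
      all (fun s => all (on_sphere s.1) s.2) S,
      (forall x, x \in X -> 0 < w x) &
      forall p : mpoly, pdeg_le p t ->
        \sum_(s <- S) (\sum_(x <- s.2) w x) * sphere_avg_r s.1 p
        = \sum_(x <- X) w x * peval p x].

End Defs.

(* the point (a x, b) of R^23 = R^22 x R *)
Definition ext23 (R : rcfType) (x : 'rV[R]_22) (a b : R) : 'rV[R]_23 :=
  \row_(i < 23) (if (i < 22)%N then a * x ord0 (inord i) else b).

(* Main.v *)
Require Import Defs.
From HB Require Import structures.
From mathcomp Require Import all_boot all_order all_algebra.
From mathcomp Require Import ring lra.
Import Order.TTheory GRing.Theory Num.Theory.
Local Open Scope ring_scope.
Set Implicit Arguments. Unset Strict Implicit. Unset Printing Implicit Defensive.


Section Gen.
Variable R : rcfType.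
Variable d : nat.
Local Notation mx := (mexp d).
Local Notation mp := (mpoly R d).

Definition madd (a b : mx) : mx := [ffun i => (a i + b i)%N].
Definition munit (l : 'I_d) : mx := [ffun i => nat_of_bool (i == l)].
Definition m0 : mx := [ffun _ => 0%N].
Definition msub1 (l : 'I_d) (a : mx) : mx := [ffun i => if i == l then (a i).-1 else a i].

Definition Phi (f : mx -> R) (p : mp) : R := \sum_(m <- p) m.1 * f m.2.
Definition mmul (p q : mp) : mp := [seq (m.1 * m'.1, madd m.2 m'.2) | m <- p, m' <- q].
Definition mder (l : 'I_d) (p : mp) : mp := [seq (m.1 * (m.2 l)%:R, msub1 l m.2) | m : R * mx <- p].
Definition mscale (c : R) (p : mp) : mp := [seq (c * m.1, m.2) | m <- p].
Definition mone : mp := [:: (1, m0)].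
Definition tlin (x : 'rV[R]_d) : mp := [seq (x ord0 i, munit i) | i <- index_enum 'I_d].
Definition usq : mp := [seq (1, madd (munit i) (munit i)) | i <- index_enum 'I_d].
Definition tpow x k := iter k (mmul (tlin x)) mone.
Definition term x m i := iter m (mmul usq) (tpow x i).
Definition hom (k : nat) (p : mp) := all (fun m => mdeg m.2 == k) p.
Definition avg (a : mx) : R := sphere_mono_avg R a.

Lemma Phi_cat f p q : Phi f (p ++ q) = Phi f p + Phi f q.
Proof. by rewrite /Phi big_cat. Qed.

Lemma Phi_mul f p q : Phi f (mmul p q) = Phi (fun a => Phi (fun b => f (madd a b)) q) p.
Proof.
rewrite /Phi /mmul big_allpairs_dep; apply: eq_bigr => m _.
by rewrite big_distrr; apply: eq_bigr => m' _ /=; rewrite mulrA.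
Qed.

Lemma Phi_der f l p : Phi f (mder l p) = Phi (fun a => (a l)%:R * f (msub1 l a)) p.
Proof. by rewrite /Phi big_map; apply: eq_bigr => m _ /=; rewrite mulrA. Qed.

Lemma Phi_scale f c p : Phi f (mscale c p) = c * Phi f p.
Proof. by rewrite /Phi big_map big_distrr; apply: eq_bigr => m _ /=; rewrite mulrA. Qed.

Lemma Phi_one f : Phi f mone = f m0.
Proof. by rewrite /Phi big_cons big_nil mul1r addr0. Qed.

Lemma Phi_tlin f x : Phi f (tlin x) = \sum_i x ord0 i * f (munit i).
Proof. by rewrite /Phi big_map. Qed.

Lemma Phi_usq f : Phi f usq = \sum_i f (madd (munit i) (munit i)).
Proof. by rewrite /Phi big_map; apply: eq_bigr => i _ /=; rewrite mul1r. Qed.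

Lemma Phi_nil f : Phi f [::] = 0.
Proof. by rewrite /Phi big_nil. Qed.

Lemma Phi_ext f g p : (forall m, m \in p -> f m.2 = g m.2) -> Phi f p = Phi g p.
Proof. by move=> H; rewrite /Phi; apply: eq_big_seq => m /H ->. Qed.

Lemma Phi_hom f g k p : hom k p -> (forall a, mdeg a = k -> f a = g a) -> Phi f p = Phi g p.
Proof. move=> /allP Hp H; apply: Phi_ext => m /Hp /eqP; exact: H. Qed.

Lemma Phi_add f g p : Phi (fun a => f a + g a) p = Phi f p + Phi g p.
Proof. by rewrite /Phi -big_split; apply: eq_bigr => m _; rewrite mulrDr. Qed.

Lemma Phi_scal c f p : Phi (fun a => c * f a) p = c * Phi f p.
Proof. by rewrite /Phi big_distrr; apply: eq_bigr => m _ /=; rewrite mulrCA. Qed.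

Lemma Phi_sum (I : finType) (F : I -> mx -> R) p :
  Phi (fun a => \sum_i F i a) p = \sum_i Phi (F i) p.
Proof.
rewrite /Phi exchange_big; apply: eq_bigr => m _ /=; by rewrite big_distrr.
Qed.

Lemma mdeg_madd a b : mdeg (madd a b) = (mdeg a + mdeg b)%N.
Proof. by rewrite /mdeg -big_split; apply: eq_bigr => i _; rewrite ffunE. Qed.

Lemma mdeg_munit l : mdeg (munit l) = 1%N.
Proof.
rewrite /mdeg (bigD1 l) //= big1 ?ffunE ?eqxx // => i /negbTE Hi.
by rewrite ffunE Hi.
Qed.

Lemma mdeg_m0 : mdeg m0 = 0%N.
Proof. by rewrite /mdeg big1 // => i _; rewrite ffunE. Qed.

Lemma mono_eval_madd a b (x : 'rV[R]_d) : mono_eval (madd a b) x = mono_eval a x * mono_eval b x.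
Proof. by rewrite /mono_eval -big_split; apply: eq_bigr => i _; rewrite ffunE exprD. Qed.

Lemma mono_eval_munit l (x : 'rV[R]_d) : mono_eval (munit l) x = x ord0 l.
Proof.
rewrite /mono_eval (bigD1 l) //= big1 ?ffunE ?eqxx ?mulr1 ?expr1 // => i /negbTE Hi.
by rewrite ffunE Hi expr0.
Qed.

Lemma mono_eval_m0 (x : 'rV[R]_d) : mono_eval m0 x = 1.
Proof. by rewrite /mono_eval big1 // => i _; rewrite ffunE expr0. Qed.

Lemma peval_Phi p x : peval p x = Phi (fun a => mono_eval a x) p.
Proof. by []. Qed.

Lemma peval_mul p q x : peval (mmul p q) x = peval p x * peval q x.
Proof.
rewrite !peval_Phi Phi_mul /Phi big_distrl; apply: eq_bigr => m _ /=.
rewrite -mulrA; congr (_ * _); rewrite big_distrr; apply: eq_bigr => m' _ /=.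
by rewrite mono_eval_madd mulrCA.
Qed.

Lemma peval_one (x : 'rV[R]_d) : peval mone x = 1.
Proof. by rewrite peval_Phi Phi_one mono_eval_m0. Qed.

Lemma peval_tlin x y : peval (tlin x) y = \sum_i x ord0 i * y ord0 i.
Proof. by rewrite peval_Phi Phi_tlin; apply: eq_bigr => i _; rewrite mono_eval_munit. Qed.

Lemma peval_usq (y : 'rV[R]_d) : peval usq y = sqnorm y.
Proof.
by rewrite peval_Phi Phi_usq; apply: eq_bigr => i _; rewrite mono_eval_madd mono_eval_munit expr2.
Qed.

Lemma peval_tpow x k y : peval (tpow x k) y = peval (tlin x) y ^+ k.
Proof.
elim: k => [|k IH]; first by rewrite peval_one expr0.
by rewrite /tpow iterS -/(tpow x k) peval_mul IH exprS.
Qed.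

Lemma peval_term x m i y : peval (term x m i) y = sqnorm y ^+ m * peval (tlin x) y ^+ i.
Proof.
elim: m => [|m IH]; first by rewrite /term /= peval_tpow expr0 mul1r.
by rewrite /term iterS -/(term x m i) peval_mul IH peval_usq exprS mulrA.
Qed.

Lemma peval_scale c p y : peval (mscale c p) y = c * peval p y.
Proof. by rewrite !peval_Phi Phi_scale. Qed.

Lemma peval_cat (p q : mp) y : peval (p ++ q) y = peval p y + peval q y.
Proof. by rewrite !peval_Phi Phi_cat. Qed.

Lemma hom_mul k k' p q : hom k p -> hom k' q -> hom (k + k') (mmul p q).
Proof.
move=> /allP Hp /allP Hq; apply/allP => m /allpairsPdep [m1 [m2 [H1 H2 ->]]] /=.
by rewrite mdeg_madd (eqP (Hp _ H1)) (eqP (Hq _ H2)).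
Qed.

Lemma hom_one : hom 0 mone.
Proof. by rewrite /hom /= mdeg_m0. Qed.

Lemma hom_tlin x : hom 1 (tlin x).
Proof. by apply/allP => m /mapP [i _ ->] /=; rewrite mdeg_munit. Qed.

Lemma hom_usq : hom 2 usq.
Proof. by apply/allP => m /mapP [i _ ->] /=; rewrite mdeg_madd mdeg_munit. Qed.

Lemma hom_tpow x k : hom k (tpow x k).
Proof.
elim: k => [|k IH]; first exact: hom_one.
by rewrite /tpow iterS -/(tpow x k); apply: (hom_mul (hom_tlin x) IH).
Qed.

Lemma hom_term x m i : hom (2 * m + i) (term x m i).
Proof.
elim: m => [|m IH]; first exact: hom_tpow.
rewrite /term iterS -/(term x m i).
have -> : (2 * m.+1 + i = 2 + (2 * m + i))%N by rewrite mulnS addnA.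
exact: hom_mul hom_usq IH.
Qed.

Lemma hom_scale k c p : hom k p -> hom k (mscale c p).
Proof. by move=> /allP H; apply/allP => m /mapP [m' /H Hm' ->]. Qed.

Lemma hom_pdeg k t p : hom k p -> (k <= t)%N -> pdeg_le p t.
Proof. by move=> /allP H Hk; apply/allP => m /H /eqP ->. Qed.


Lemma dfactS n : dfact n.+1 = (n.+1 * dfact n.-1)%N.
Proof. by case: n => [|n] //=; rewrite muln1. Qed.

Lemma even_mdeg (a : mx) : [forall i, ~~ odd (a i)] -> ~~ odd (mdeg a).
Proof.
move=> /forallP H; rewrite /mdeg.
elim/big_ind: _ => //; first by move=> x y /negbTE Hx /negbTE Hy; rewrite oddD Hx Hy.
Qed.

Lemma den_neq0 (k : nat) : (0 < d)%N -> \prod_(j < k) ((d + 2 * j)%:R : R) != 0.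
Proof.
move=> Hd; rewrite -natr_prod pnatr_eq0 -lt0n prodn_gt0 // => j.
by rewrite addn_gt0 Hd.
Qed.

Hypothesis d_gt0 : (0 < d)%N.

Lemma avgA0 l (c : mx) :
  avg (madd (madd (munit l) (munit l)) c) = (c l).+1%:R / (d + mdeg c)%:R * avg c.
Proof.
rewrite /avg /sphere_mono_avg.
set b := madd _ _.
have Hb i : b i = ((i == l).*2 + c i)%N by rewrite !ffunE addnn.
have -> : [forall i, ~~ odd (b i)] = [forall i, ~~ odd (c i)].
  by apply: eq_forallb => i; rewrite Hb oddD odd_double.
case: ifP => Hev; last by rewrite mulr0.
have Hm : mdeg b = (mdeg c).+2 by rewrite !mdeg_madd mdeg_munit.
rewrite Hm /= big_ord_recr /=.
have Hc2 : (2 * (mdeg c)./2)%N = mdeg c.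
  by rewrite mul2n -{2}(odd_double_half (mdeg c)) (negbTE (even_mdeg Hev)).
rewrite Hc2.
rewrite (bigD1 l) //= [X in _ = _ * (X%:R / _)](bigD1 l) //=.
have -> : (b l).-1 = (c l).+1 by rewrite Hb eqxx.
rewrite dfactS.
have -> : \prod_(i < d | i != l) dfact (b i).-1 = \prod_(i < d | i != l) dfact (c i).-1.
  by apply: eq_bigr => i /negbTE Hi; rewrite Hb Hi.
have HD := den_neq0 (mdeg c)./2 d_gt0.
have Hdm : ((d + mdeg c)%:R : R) != 0 by rewrite pnatr_eq0 -lt0n addn_gt0 d_gt0.
rewrite !natrM; field.
by rewrite HD -natrD Hdm.
Qed.

Lemma avg_odd l (a : mx) : a l = 0%N -> avg (madd (munit l) a) = 0.
Proof.
move=> Hl; rewrite /avg /sphere_mono_avg; case: ifP => // /forallP /(_ l).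
by rewrite !ffunE eqxx Hl.
Qed.

Lemma madd_unit_sub l (a : mx) : (0 < a l)%N -> madd (munit l) (msub1 l a) = a.
Proof.
move=> Ha; apply/ffunP => i; rewrite !ffunE; case: eqP => [->|_] //=.
by rewrite add1n prednK.
Qed.

Lemma maddA (a b c : mx) : madd (madd a b) c = madd a (madd b c).
Proof. by apply/ffunP => i; rewrite !ffunE addnA. Qed.

Lemma madd0m (a : mx) : madd m0 a = a.
Proof. by apply/ffunP => i; rewrite !ffunE. Qed.

Lemma avg_ibp l (a : mx) :
  avg (madd (munit l) a) = (a l)%:R * avg (msub1 l a) / (d + (mdeg a).-1)%:R.
Proof.
case Hl: (a l) => [|k]; first by rewrite avg_odd // mul0r mul0r.
have Ha : (0 < a l)%N by rewrite Hl.
rewrite -{1}(madd_unit_sub Ha) -maddA avgA0.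
have -> : (msub1 l a) l = k by rewrite ffunE eqxx Hl.
have -> : mdeg (msub1 l a) = (mdeg a).-1.
  by rewrite -{2}(madd_unit_sub Ha) mdeg_madd mdeg_munit.
by rewrite mulrAC.
Qed.

Lemma avg_sq_sum (c : mx) : \sum_l avg (madd (madd (munit l) (munit l)) c) = avg c.
Proof.
rewrite (eq_bigr (fun l => (c l).+1%:R / (d + mdeg c)%:R * avg c)); last by move=> i _; rewrite avgA0.
rewrite -big_distrl -big_distrl /= -natr_sum.
have -> : (\sum_(i < d) (c i).+1 = d + mdeg c)%N.
  by rewrite (eq_bigr (fun i => c i + 1)%N) ?big_split /= ?sum_nat_const ?card_ord ?muln1 1?addnC // => i _; rewrite addn1.
have Hdm : ((d + mdeg c)%:R : R) != 0 by rewrite pnatr_eq0 -lt0n addn_gt0 d_gt0.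
by rewrite divff // mul1r.
Qed.

Lemma avg_m0 : avg m0 = 1.
Proof.
rewrite /avg /sphere_mono_avg; case: ifP => [_|/forallP []]; last by move=> i; rewrite ffunE.
rewrite mdeg_m0 big_ord0 big1 ?divr1 // => i _; by rewrite ffunE.
Qed.

Lemma avg_unit l : avg (munit l) = 0.
Proof.
have -> : munit l = madd (munit l) m0 by apply/ffunP => i; rewrite !ffunE addn0.
by rewrite avg_odd // ffunE.
Qed.


Lemma msub1_madd_l l (a b : mx) : (0 < a l)%N -> msub1 l (madd a b) = madd (msub1 l a) b.
Proof.
move=> H; apply/ffunP => i; rewrite !ffunE; case: eqP => [->|] //.
by rewrite -subn1 addnC -addnBA ?subn1 1?addnC.
Qed.

Lemma msub1_madd_r l (a b : mx) : (0 < b l)%N -> msub1 l (madd a b) = madd a (msub1 l b).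
Proof.
move=> H; apply/ffunP => i; rewrite !ffunE; case: eqP => [->|] //.
by rewrite -subn1 -addnBA ?subn1.
Qed.

Lemma Phi_der_mul f l p q :
  Phi f (mder l (mmul p q)) = Phi f (mmul (mder l p) q) + Phi f (mmul p (mder l q)).
Proof.
rewrite Phi_der !Phi_mul Phi_der -Phi_add; apply: Phi_ext => m _.
rewrite Phi_der -Phi_scal -Phi_add; apply: Phi_ext => m' _.
rewrite ffunE natrD mulrDl; congr (_ + _).
  case Ha: (m.2 l) => [|k]; first by rewrite !mul0r.
  by rewrite msub1_madd_l ?Ha.
case Hb: (m'.2 l) => [|k]; first by rewrite !mul0r.
by rewrite msub1_madd_r ?Hb.
Qed.

Lemma Phi_tpowS f x k :
  Phi f (tpow x k.+1) = \sum_i x ord0 i * Phi (fun b => f (madd (munit i) b)) (tpow x k).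
Proof. by rewrite /tpow iterS -/(tpow x k) Phi_mul Phi_tlin. Qed.

Lemma Phi_der_tpow x l k : forall f,
  Phi f (mder l (tpow x k)) = k%:R * x ord0 l * Phi f (tpow x k.-1).
Proof.
elim: k => [|k IH] f.
  by rewrite Phi_der /tpow /= Phi_one ffunE mul0r !mul0r.
rewrite /tpow iterS -/(tpow x k) Phi_der_mul.
have -> : Phi f (mmul (mder l (tlin x)) (tpow x k)) = x ord0 l * Phi f (tpow x k).
  rewrite Phi_mul Phi_der Phi_tlin (bigD1 l) //= big1 ?addr0.
    rewrite ffunE eqxx mul1r; congr (_ * _); apply: Phi_ext => m _.
    congr f; apply/ffunP => i; rewrite !ffunE; by case: eqP.
  by move=> i /negbTE Hi; rewrite ffunE eq_sym Hi mul0r mulr0.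
rewrite Phi_mul Phi_tlin.
under eq_bigr do rewrite IH.
case: k IH => [|k] IH.
  by rewrite big1 ?addr0 ?mul1r // => i _; rewrite !mul0r mulr0.
rewrite Phi_tpowS !big_distrr /= -big_split /=; apply: eq_bigr => i _.
rewrite -[k.+2]addn1 natrD; ring.
Qed.

Lemma Phi_avg_usq p : Phi avg (mmul usq p) = Phi avg p.
Proof.
rewrite Phi_mul Phi_usq -Phi_sum; apply: Phi_ext => m _.
exact: avg_sq_sum.
Qed.

Lemma Phi_avg_term x m i : Phi avg (term x m i) = Phi avg (tpow x i).
Proof.
elim: m => [|m IH] //.
by rewrite /term iterS -/(term x m i) Phi_avg_usq.
Qed.

Lemma Phi_rad r k p : hom k p -> Phi (fun a => r ^+ mdeg a * avg a) p = r ^+ k * Phi avg p.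
Proof. by move=> H; rewrite -Phi_scal; apply: (Phi_hom H) => a ->. Qed.

Lemma avg_r_Phi r p : sphere_avg_r r p = Phi (fun a => r ^+ mdeg a * avg a) p.
Proof. by rewrite /sphere_avg_r /Phi; apply: eq_bigr => m _; rewrite mulrA. Qed.

Definition Lam x k := Phi avg (tpow x k).

Lemma Lam0 x : Lam x 0 = 1.
Proof. by rewrite /Lam /tpow /= Phi_one avg_m0. Qed.

Lemma Lam1 x : Lam x 1 = 0.
Proof.
rewrite /Lam Phi_tpowS big1 // => i _.
rewrite /tpow /= Phi_one.
have -> : madd (munit i) m0 = munit i by apply/ffunP => j; rewrite !ffunE addn0.
by rewrite avg_unit mulr0.
Qed.

Lemma LamSS x k : Lam x k.+2 = k.+1%:R * sqnorm x / (d + k)%:R * Lam x k.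
Proof.
rewrite /Lam Phi_tpowS.
have E i : Phi (fun b => avg (madd (munit i) b)) (tpow x k.+1)
         = (d + k)%:R^-1 * (k.+1%:R * x ord0 i * Phi avg (tpow x k)).
  rewrite -Phi_der_tpow Phi_der -Phi_scal; apply: (Phi_hom (hom_tpow x k.+1)) => a Ha.
  by rewrite avg_ibp Ha /= mulrC.
under eq_bigr do rewrite E.
transitivity (\sum_i x ord0 i ^+ 2 * ((d + k)%:R^-1 * (k.+1%:R * Phi avg (tpow x k)))).
  by apply: eq_bigr => i _; ring.
by rewrite -big_distrl /= /sqnorm; ring.
Qed.

End Gen.


Section Tup.
Variable R : rcfType.
Variable d : nat.
Hypothesis d_gt0 : (0 < d)%N.
Local Notation mx := (mexp d).
Local Notation mp := (mpoly R d).

Definition tup (x : 'rV[R]_d) (L : seq (R * nat * nat)) : mp :=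
  flatten [seq mscale t.1.1 (term x t.1.2 t.2) | t <- L].

Lemma peval_tup x L y :
  peval (tup x L) y = \sum_(t <- L) t.1.1 * (sqnorm y ^+ t.1.2 * peval (tlin x) y ^+ t.2).
Proof.
elim: L => [|t L IH]; first by rewrite big_nil /tup /= /peval big_nil.
by rewrite /tup /= peval_cat -/(tup x L) IH big_cons peval_scale peval_term.
Qed.

Lemma avg_tup r x L :
  sphere_avg_r r (tup x L) = \sum_(t <- L) t.1.1 * (r ^+ (2 * t.1.2 + t.2) * Lam x t.2).
Proof.
elim: L => [|t L IH]; first by rewrite big_nil /tup /= avg_r_Phi Phi_nil.
rewrite avg_r_Phi in IH.
rewrite /tup /= avg_r_Phi Phi_cat IH big_cons; congr (_ + _).
by rewrite Phi_scale (Phi_rad r (hom_term x t.1.2 t.2)) Phi_avg_term.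
Qed.

Lemma pdeg_tup x L k : all (fun t => 2 * t.1.2 + t.2 <= k)%N L -> pdeg_le (tup x L) k.
Proof.
elim: L => [|t L IH] //= /andP [H1 H2].
rewrite /pdeg_le all_cat; apply/andP; split; last exact: IH.
exact: (hom_pdeg (hom_scale _ (hom_term x t.1.2 t.2)) H1).
Qed.

Lemma peval_tlin_self (x : 'rV[R]_d) : peval (tlin x) x = sqnorm x.
Proof. by rewrite peval_tlin /sqnorm; apply: eq_bigr => i _; rewrite expr2. Qed.

Lemma sum_ge_point (X : seq 'rV[R]_d) (F : 'rV[R]_d -> R) x0 :
  uniq X -> x0 \in X -> (forall x, x \in X -> 0 <= F x) -> F x0 <= \sum_(x <- X) F x.
Proof.
move=> HU Hx HF; rewrite (bigD1_seq x0) //= lerDl big_seq_cond sumr_ge0 // => x /andP [Hi _].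
exact: HF.
Qed.

End Tup.


Section W.
Variable R : rcfType.

Lemma sum_le_const (X : seq 'rV[R]_22) (F : 'rV[R]_22 -> R) (c : R) :
  (forall x, x \in X -> F x <= c) -> \sum_(x <- X) F x <= c * (size X)%:R.
Proof.
elim: X => [|a X IH] H; first by rewrite big_nil mulr0.
rewrite big_cons /= -[(size X).+1]addn1 natrD mulrDr mulr1 addrC lerD //.
  by apply: IH => x Hx; apply: H; rewrite inE Hx orbT.
by apply: H; rewrite inE eqxx.
Qed.

Lemma sum_eq_const (X : seq 'rV[R]_22) (F : 'rV[R]_22 -> R) (c : R) :
  (forall x, x \in X -> F x <= c) -> \sum_(x <- X) F x = c * (size X)%:R ->
  forall x, x \in X -> F x = c.
Proof.
elim: X => [|a X IH] H //.
rewrite big_cons /= -[(size X).+1]addn1 natrD mulrDr mulr1 => E.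
have H1 : forall x, x \in X -> F x <= c by move=> x Hx; apply: H; rewrite inE Hx orbT.
have Ha : F a <= c by apply: H; rewrite inE eqxx.
have Hs := sum_le_const H1.
have Ea : F a = c by lra.
move=> x; rewrite inE => /orP [/eqP ->|Hx] //.
apply: IH => //; lra.
Qed.

Definition d22 : (0 < 22)%N := erefl.

Lemma LamV (x : 'rV[R]_22) :
  (Lam x 0 = 1) * (Lam x 1 = 0) * (Lam x 2 = sqnorm x / 22) * (Lam x 3 = 0) *
      (Lam x 4 = 3 * sqnorm x ^+ 2 / 528) * (Lam x 5 = 0) * (Lam x 6 = 15 * sqnorm x ^+ 3 / 13728).
Proof.
have L0 := Lam0 x; have L1 := Lam1 x.
have L2 : Lam x 2 = sqnorm x / 22 by rewrite (LamSS d22) L0 /=; field.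
have L3 : Lam x 3 = 0 by rewrite (LamSS d22) L1 mulr0.
have L4 : Lam x 4 = 3 * sqnorm x ^+ 2 / 528 by rewrite (LamSS d22) L2 /=; field.
have L5 : Lam x 5 = 0 by rewrite (LamSS d22) L3 mulr0.
have L6 : Lam x 6 = 15 * sqnorm x ^+ 3 / 13728 by rewrite (LamSS d22) L4 /=; field.
by [].
Qed.


Lemma point_bound (X : seq 'rV[R]_22) (w : 'rV[R]_22 -> R) (W1 W2 : R) (x0 : 'rV[R]_22) Lq Lsq :
  (forall p, pdeg_le p 6 -> W1 * sphere_avg_r 1 p + W2 * sphere_avg_r (Num.sqrt 11) p
                            = \sum_(x <- X) w x * peval p x) ->
  uniq X -> (forall x, x \in X -> 0 < w x) -> x0 \in X ->
  all (fun t => 2 * t.1.2 + t.2 <= 6)%N Lsq ->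
  (forall y, peval (tup x0 Lsq) y = peval (tup x0 Lq) y ^+ 2) ->
  w x0 * peval (tup x0 Lq) x0 ^+ 2 <=
    W1 * sphere_avg_r 1 (tup x0 Lsq) + W2 * sphere_avg_r (Num.sqrt 11) (tup x0 Lsq).
Proof.
move=> Hd HU Hw Hx0 Hdeg Hsq; rewrite Hd; last exact: pdeg_tup.
rewrite -Hsq; apply: (sum_ge_point (F := fun x => w x * peval (tup x0 Lsq) x)) => // x Hx.
by rewrite Hsq mulr_ge0 ?sqr_ge0 // ltW // Hw.
Qed.

Definition q1 : seq (R * nat * nat) :=
  [:: (1 : R, 0%N, 0%N); (-5 : R, 1%N, 0%N); (22 : R, 0%N, 1%N); (-20 : R, 1%N, 1%N); (108 : R, 0%N, 2%N); (144 : R, 0%N, 3%N)].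
Definition s1 : seq (R * nat * nat) :=
  [:: (1 : R, 0%N, 0%N); (-10 : R, 1%N, 0%N); (25 : R, 2%N, 0%N); (44 : R, 0%N, 1%N); (-(130*2) : R, 1%N, 1%N); (200 : R, 2%N, 1%N); ((175*4) : R, 0%N, 2%N); (-(196*10) : R, 1%N, 2%N); ((200*2) : R, 2%N, 2%N); ((180*28) : R, 0%N, 3%N); (-(192*30) : R, 1%N, 3%N); ((200*90) : R, 0%N, 4%N); (-(192*30) : R, 1%N, 4%N); ((192*162) : R, 0%N, 5%N); ((192*108) : R, 0%N, 6%N)].
Definition q11 : seq (R * nat * nat) :=
  [:: (-1 : R, 0%N, 0%N); (-5 : R, 1%N, 0%N); (-2 : R, 0%N, 1%N); (-20 : R, 1%N, 1%N); (12 : R, 0%N, 2%N); (16 : R, 0%N, 3%N)].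
Definition s11 : seq (R * nat * nat) :=
  [:: (1 : R, 0%N, 0%N); (10 : R, 1%N, 0%N); (25 : R, 2%N, 0%N); (4 : R, 0%N, 1%N); (60 : R, 1%N, 1%N); (200 : R, 2%N, 1%N); (-20 : R, 0%N, 2%N); (-40 : R, 1%N, 2%N); ((200*2) : R, 2%N, 2%N); (-80 : R, 0%N, 3%N); (-(160*4) : R, 1%N, 3%N); (80 : R, 0%N, 4%N); (-(160*4) : R, 1%N, 4%N); ((192*2) : R, 0%N, 5%N); ((128*2) : R, 0%N, 6%N)].

Lemma sq1_ok (x0 y : 'rV[R]_22) : peval (tup x0 s1) y = peval (tup x0 q1) y ^+ 2.
Proof. rewrite !peval_tup !big_cons !big_nil /=; ring. Qed.

Lemma sq11_ok (x0 y : 'rV[R]_22) : peval (tup x0 s11) y = peval (tup x0 q11) y ^+ 2.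
Proof. rewrite !peval_tup !big_cons !big_nil /=; ring. Qed.

Lemma q1_val (x0 : 'rV[R]_22) : sqnorm x0 = 1 -> peval (tup x0 q1) x0 = 250.
Proof. move=> Hs; rewrite peval_tup peval_tlin_self Hs !big_cons big_nil /=; ring. Qed.

Lemma q11_val (x0 : 'rV[R]_22) : sqnorm x0 = 11 -> peval (tup x0 q11) x0 = 20250.
Proof. move=> Hs; rewrite peval_tup peval_tlin_self Hs !big_cons big_nil /=; ring. Qed.

Lemma s1_avg (x0 : 'rV[R]_22) r : sqnorm x0 = 1 -> r ^+ 2 = 11 ->
  sphere_avg_r 1 (tup x0 s1) = 9883 / 143 /\ sphere_avg_r r (tup x0 s1) = 81 * 7 * 359 / 13.
Proof.
move=> Hs Hr.
have r4 : r ^+ 4 = 121 by rewrite (_ : 4 = 2 * 2)%N // exprM Hr; ring.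
have r6 : r ^+ 6 = 1331 by rewrite (_ : 6 = 2 * 3)%N // exprM Hr; ring.
rewrite !(avg_tup d22) /s1 !big_cons !big_nil /= !LamV Hs !expr1n ?Hr ?r4 ?r6 ?expr0 !mulr0 ?mul0r ?mulr0.
by split; field.
Qed.


Lemma s11_avg (x0 : 'rV[R]_22) r : sqnorm x0 = 11 -> r ^+ 2 = 11 ->
  sphere_avg_r 1 (tup x0 s11) = 2513 / 13 /\
  sphere_avg_r r (tup x0 s11) = 3 * 3 * 29 * (91 * 100 + 33) / 13.
Proof.
move=> Hs Hr.
have r4 : r ^+ 4 = 121 by rewrite (_ : 4 = 2 * 2)%N // exprM Hr; ring.
have r6 : r ^+ 6 = 1331 by rewrite (_ : 6 = 2 * 3)%N // exprM Hr; ring.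
rewrite !(avg_tup d22) /s11 !big_cons !big_nil /= !LamV Hs !expr1n ?Hr ?r4 ?r6 ?expr0 !mulr0 ?mul0r ?mulr0.
by split; field.
Qed.


Lemma sum_gt0_seq (X : seq 'rV[R]_22) (F : 'rV[R]_22 -> R) :
  X != [::] -> (forall x, x \in X -> 0 < F x) -> 0 < \sum_(x <- X) F x.
Proof.
case: X => [|a X] // _ H; rewrite big_cons ltr_wpDr //; last by apply: H; rewrite inE eqxx.
rewrite big_seq_cond sumr_ge0 // => x /andP [Hx _]; apply: ltW; apply: H.
by rewrite inE Hx orbT.
Qed.

Lemma unpack (X1 X2 : seq 'rV[R]_22) (w : 'rV[R]_22 -> R) :
  euclidean_design 6 [:: (1, X1); (Num.sqrt 11, X2)] w ->
  [/\ uniq (X1 ++ X2), all (on_sphere 1) X1 && all (on_sphere (Num.sqrt 11)) X2,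
      (forall x, x \in X1 ++ X2 -> 0 < w x) &
      (forall p, pdeg_le p 6 -> (\sum_(x <- X1) w x) * sphere_avg_r 1 p
          + (\sum_(x <- X2) w x) * sphere_avg_r (Num.sqrt 11) p = \sum_(x <- X1 ++ X2) w x * peval p x)].
Proof.
case=> /= HU _ /andP [Hs1 /andP [Hs2 _]] Hw Hd; rewrite cats0 in HU Hw Hd.
split => //; first by rewrite Hs1 Hs2.
by move=> p /Hd; rewrite !big_cons big_nil addr0.
Qed.

Lemma weights (X1 X2 : seq 'rV[R]_22) (w : 'rV[R]_22 -> R) :
  euclidean_design 6 [:: (1, X1); (Num.sqrt 11, X2)] w ->
  size X1 = 275%N -> size X2 = 2025%N ->
  [/\ \sum_(x <- X1) w x = 99 * \sum_(x <- X2) w x, 0 < \sum_(x <- X2) w x,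
      (forall x, x \in X1 -> w x = (\sum_(x <- X1) w x) / 275) &
      (forall x, x \in X2 -> w x = (\sum_(x <- X2) w x) / 2025)].
Proof.
move=> /unpack [HU /andP [Hs1 Hs2] Hw Hd] Hn1 Hn2.
set W1 := \sum_(x <- X1) w x; set W2 := \sum_(x <- X2) w x.
have Hr : Num.sqrt 11 ^+ 2 = 11 :> R by rewrite sqr_sqrtr.
have W2p : 0 < W2.
  apply: sum_gt0_seq; first by rewrite -size_eq0 Hn2.
  by move=> x Hx; apply: Hw; rewrite mem_cat Hx orbT.
have W1p : 0 < W1.
  apply: sum_gt0_seq; first by rewrite -size_eq0 Hn1.
  by move=> x Hx; apply: Hw; rewrite mem_cat Hx.
pose c1 := (W1 * (9883 / 143) + W2 * (81 * 7 * 359 / 13)) / (250 * 250).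
pose c2 := (W1 * (2513 / 13) + W2 * (3 * 3 * 29 * (91 * 100 + 33) / 13)) / (20250 * 20250).
have B1 : forall x, x \in X1 -> w x <= c1.
  move=> x Hx.
  have Hsx : sqnorm x = 1 by move: (allP Hs1 x Hx) => /eqP ->; rewrite expr1n.
  have := point_bound (Lq := q1) (x0 := x) Hd HU Hw _ _ (sq1_ok x).
  rewrite q1_val // (proj1 (s1_avg Hsx Hr)) (proj2 (s1_avg Hsx Hr)) mem_cat Hx => /(_ isT isT) H.
  rewrite /c1; rewrite expr2 -/W1 -/W2 in H; lra.
have B2 : forall x, x \in X2 -> w x <= c2.
  move=> x Hx.
  have Hsx : sqnorm x = 11 by move: (allP Hs2 x Hx) => /eqP ->.
  have := point_bound (Lq := q11) (x0 := x) Hd HU Hw _ _ (sq11_ok x).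
  rewrite q11_val // (proj1 (s11_avg Hsx Hr)) (proj2 (s11_avg Hsx Hr)) mem_cat Hx orbT
    => /(_ isT isT) H.
  rewrite /c2; rewrite expr2 -/W1 -/W2 in H; lra.
have I1 := sum_le_const B1; have I2 := sum_le_const B2.
rewrite -/W1 -/W2 Hn1 Hn2 in I1 I2.
have E : W1 = 99 * W2 by rewrite /c1 /c2 in I1 I2; lra.
have E1 : W1 = c1 * 275%:R by rewrite /c1; lra.
have E2 : W2 = c2 * 2025%:R by rewrite /c2; lra.
clearbody c1 c2.
split => //.
  move=> x Hx; rewrite (sum_eq_const B1 _ Hx); last by rewrite -/W1 Hn1 -E1.
  lra.
move=> x Hx; rewrite (sum_eq_const B2 _ Hx); last by rewrite -/W2 Hn2 -E2.
lra.
Qed.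

End W.


Section Z.
Variable R : rcfType.

Definition split22 (a : mexp 23) : mexp 22 := [ffun i => a (widen_ord (leqnSn 22) i)].

Lemma mdeg23 (a : mexp 23) : mdeg a = (mdeg (split22 a) + a ord_max)%N.
Proof. by rewrite /mdeg big_ord_recr /=; congr (_ + _)%N; apply: eq_bigr => i _; rewrite ffunE. Qed.

Lemma ext23_w (x : 'rV[R]_22) al be (i : 'I_22) :
  ext23 x al be ord0 (widen_ord (leqnSn 22) i) = al * x ord0 i.
Proof.
rewrite mxE /= ltn_ord; congr (_ * x ord0 _); apply: val_inj; by rewrite /= inordK // ltnW // ltnS ltn_ord.
Qed.

Lemma ext23_last (x : 'rV[R]_22) al be : ext23 x al be ord0 ord_max = be.
Proof. by rewrite mxE. Qed.

Lemma mono_ext23 (a : mexp 23) (x : 'rV[R]_22) al be :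
  mono_eval a (ext23 x al be) = al ^+ mdeg (split22 a) * be ^+ (a ord_max) * mono_eval (split22 a) x.
Proof.
rewrite /mono_eval big_ord_recr /= ext23_last [RHS]mulrAC; congr (_ * _).
rewrite /mdeg -prodrXr -big_split /=; apply: eq_bigr => i _.
by rewrite ext23_w !ffunE exprMn.
Qed.

Lemma mono_neg (a : mexp 23) (z : 'rV[R]_23) : mono_eval a (- z) = (-1) ^+ mdeg a * mono_eval a z.
Proof.
rewrite /mono_eval /mdeg -prodrXr -big_split /=; apply: eq_bigr => i _.
by rewrite mxE (exprNn (z ord0 i)).
Qed.

Lemma sqnorm_ext23 (x : 'rV[R]_22) al be : sqnorm (ext23 x al be) = al ^+ 2 * sqnorm x + be ^+ 2.
Proof.
rewrite /sqnorm big_ord_recr /= ext23_last big_distrr; congr (_ + _); apply: eq_bigr => i _.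
by rewrite ext23_w exprMn.
Qed.

Lemma sqnorm_neg (z : 'rV[R]_23) : sqnorm (- z) = sqnorm z.
Proof. by rewrite /sqnorm; apply: eq_bigr => i _; rewrite mxE sqrrN. Qed.

Definition Fjk (j k : nat) : R :=
  if odd k then 0 else
  (dfact k.-1)%:R * (\prod_(i < j./2) (22 + 2 * i)%:R) / \prod_(i < (j + k)./2) (23 + 2 * i)%:R.

Lemma avg23 (a : mexp 23) :
  sphere_mono_avg R a = sphere_mono_avg R (split22 a) * Fjk (mdeg (split22 a)) (a ord_max).
Proof.
rewrite /sphere_mono_avg /Fjk.
have Hf : [forall i, ~~ odd (a i)] = [forall i, ~~ odd (split22 a i)] && ~~ odd (a ord_max).
  apply/forallP/andP => [H|[/forallP H1 H2] i].
    split => //; apply/forallP => i; rewrite ffunE; exact: H.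
  case: (unliftP ord_max i) => [j ->|->] //.
  have := H1 j; rewrite ffunE; congr (~~ odd (a _)); apply: val_inj => /=.
  by rewrite /bump leqNgt ltn_ord.
rewrite Hf mdeg23.
have [E1|E1] := boolP [forall i, ~~ odd (split22 a i)]; rewrite ?E1 /=; last by rewrite mul0r.
have [Hk|Hk] := boolP (odd (a ord_max)); rewrite ?Hk /=; first by rewrite mulr0.
rewrite big_ord_recr /= mulrC natrM.
have D22 := den_neq0 R (mdeg (split22 a))./2 d22.
have D23 := den_neq0 R (mdeg (split22 a) + a ord_max)./2 (erefl : (0 < 23)%N).
have -> : \prod_(i < 22) dfact (a (widen_ord (leqnSn 22) i)).-1 = \prod_(i < 22) dfact (split22 a i).-1.
  by apply: eq_bigr => i _; rewrite ffunE.
by field; rewrite D22 D23.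
Qed.


Lemma NL (j k : nat) (S1 S2 A : R) :
  (j + k <= 6)%N -> ~~ odd (j + k) ->
  (99/275) * S1 + S2/2025 = (99 + 11 ^+ (j./2)) * A ->
  ((j <= 4)%N -> (99/275) * S1 + 11 * S2/2025 = (99 + 11 ^+ (j./2).+1) * A) ->
  (odd j -> A = 0) ->
  2 * (2 ^+ j / 5 ^+ ((j + k)./2) * S1 + 2 ^+ j / 45 ^+ ((j + k)./2) * S2) = 4600 * (A * Fjk j k).
Proof.
move=> Hjk Hev H1 H2 Hodd.
have eS1 : S1 = 275/99 * ((99 + 11 ^+ j./2) * A - S2/2025) by rewrite -H1; field.
have eS2 : (j <= 4)%N -> S2 = 2025/10 * (11 ^+ (j./2).+1 - 11 ^+ (j./2)) * A.
  move=> /H2 H2'.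
  have : 10 * S2 / 2025 = (99 + 11 ^+ (j./2).+1) * A - (99 + 11 ^+ j./2) * A.
    by rewrite -H2' -H1; field.
  move=> H3; transitivity (2025/10 * (10 * S2 / 2025)); first by field.
  by rewrite H3; ring.
rewrite eS1; clear H1 H2 eS1; move: Hjk Hev eS2 Hodd.
case: j => [|[|[|[|[|[|[|j]]]]]]]; case: k => [|[|[|[|[|[|[|k]]]]]]] // => _ _ eS2 Hodd;
  rewrite /Fjk /= ?big_ord_recr ?big_ord0 /=;
  try (rewrite (eS2 isT)); try (rewrite (Hodd isT)); by field.
Qed.

End Z.


Section M.
Variable R : rcfType.

Lemma pow_even (r c : R) j : r ^+ 2 = c -> ~~ odd j -> r ^+ j = c ^+ j./2.
Proof.
move=> Hr Hj; rewrite -{1}(odd_double_half j) (negbTE Hj) add0n -mul2n exprM Hr //.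
Qed.

Lemma avg_odd_deg (d : nat) (a : mexp d) : odd (mdeg a) -> sphere_mono_avg R a = 0.
Proof.
move=> Ho; rewrite /sphere_mono_avg; case: ifP => // /even_mdeg; by rewrite Ho.
Qed.

Lemma peval_single (d : nat) (a : mexp d) (x : 'rV[R]_d) : peval [:: (1, a)] x = mono_eval a x.
Proof. by rewrite /peval big_cons big_nil mul1r addr0. Qed.

Lemma avg_single (d : nat) (a : mexp d) (r : R) : sphere_avg_r r [:: (1, a)] = r ^+ mdeg a * sphere_mono_avg R a.
Proof. by rewrite /sphere_avg_r big_cons big_nil mul1r addr0. Qed.

Lemma hom_single (d : nat) (a : mexp d) : hom (mdeg a) [:: ((1 : R), a)].
Proof. by rewrite /hom /= eqxx. Qed.

Lemma avg_usq_single (d : nat) (a : mexp d) (r : R) : (0 < d)%N ->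
  sphere_avg_r r (mmul (usq R d) [:: (1, a)]) = r ^+ (2 + mdeg a) * sphere_mono_avg R a.
Proof.
move=> Hd; rewrite avg_r_Phi (Phi_rad r (hom_mul (hom_usq R d) (hom_single a))).
by rewrite (Phi_avg_usq Hd) /Phi big_cons big_nil mul1r addr0.
Qed.

Lemma peval_usq_single (d : nat) (a : mexp d) (x : 'rV[R]_d) :
  peval (mmul (usq R d) [:: (1, a)]) x = sqnorm x * mono_eval a x.
Proof. by rewrite peval_mul peval_usq peval_single. Qed.

Lemma sum_weighted (X : seq 'rV[R]_22) (w : 'rV[R]_22 -> R) c (F : 'rV[R]_22 -> R) :
  (forall x, x \in X -> w x = c) -> \sum_(x <- X) w x * F x = c * \sum_(x <- X) F x.
Proof.
move=> H; rewrite big_distrr /=; apply: eq_big_seq => x Hx; by rewrite H.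
Qed.

Lemma sum_weighted2 (X : seq 'rV[R]_22) (w : 'rV[R]_22 -> R) c v (F : 'rV[R]_22 -> R) :
  (forall x, x \in X -> w x = c) -> (forall x, x \in X -> sqnorm x = v) ->
  \sum_(x <- X) w x * (sqnorm x * F x) = c * v * \sum_(x <- X) F x.
Proof.
move=> H H'; rewrite big_distrr /=; apply: eq_big_seq => x Hx; by rewrite (H x Hx) (H' x Hx) mulrA.
Qed.


Lemma pow2 (s : R) j k : s != 0 -> ~~ odd (j + k) ->
  (2 / s) ^+ j * (1 / s) ^+ k = 2 ^+ j / (s ^+ 2) ^+ ((j + k)./2).
Proof.
move=> Hs Hev; rewrite -(pow_even (erefl (s ^+ 2))) // !expr_div_n expr1n exprD.
by field; rewrite !expf_neq0.
Qed.

Lemma block_sum (X : seq 'rV[R]_22) (a : mexp 23) al be :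
  \sum_(z <- [seq ext23 x al be | x <- X]) mono_eval a z
  = al ^+ mdeg (split22 a) * be ^+ (a ord_max) * \sum_(x <- X) mono_eval (split22 a) x.
Proof. by rewrite big_map big_distrr; apply: eq_bigr => x _; rewrite mono_ext23. Qed.

Lemma block_sumN (X : seq 'rV[R]_22) (a : mexp 23) al be :
  \sum_(z <- [seq - ext23 x al be | x <- X]) mono_eval a z
  = (-1) ^+ mdeg a * (al ^+ mdeg (split22 a) * be ^+ (a ord_max) * \sum_(x <- X) mono_eval (split22 a) x).
Proof.
rewrite -block_sum !big_map big_distrr; apply: eq_bigr => x _; by rewrite mono_neg.
Qed.

Lemma key (X1 X2 : seq 'rV[R]_22) (w : 'rV[R]_22 -> R) (a : mexp 23) :
  euclidean_design 6 [:: (1, X1); (Num.sqrt 11, X2)] w ->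
  size X1 = 275%N -> size X2 = 2025%N -> (mdeg a <= 7)%N ->
  \sum_(z <- [seq ext23 x (2 / Num.sqrt 5) (1 / Num.sqrt 5) | x <- X1]
        ++ [seq ext23 x (2 / (3 * Num.sqrt 5)) (1 / (3 * Num.sqrt 5)) | x <- X2]
        ++ [seq - ext23 x (2 / Num.sqrt 5) (1 / Num.sqrt 5) | x <- X1]
        ++ [seq - ext23 x (2 / (3 * Num.sqrt 5)) (1 / (3 * Num.sqrt 5)) | x <- X2]) mono_eval a z
  = 4600 * sphere_mono_avg R a.
Proof.
move=> Hdes Hn1 Hn2 Hdeg.
have [E W2p Hw1 Hw2] := weights Hdes Hn1 Hn2.
have [HU /andP [Hs1 Hs2] Hw Hd] := unpack Hdes.
have W2n0 : \sum_(x <- X2) w x != 0 by rewrite gt_eqF.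
move: E W2p W2n0 Hw1 Hw2 Hd.
set W1 := \sum_(x <- X1) w x; set W2 := \sum_(x <- X2) w x => E W2p W2n0 Hw1 Hw2 Hd.
set s5 := Num.sqrt 5.
have s5n0 : s5 != 0 by rewrite sqrtr_eq0 -ltNge.
have s52 : s5 ^+ 2 = 5 by rewrite sqr_sqrtr.
have s352 : (3 * s5) ^+ 2 = 45 by rewrite exprMn s52; ring.
have s3n0 : 3 * s5 != 0 by rewrite mulf_neq0 // pnatr_eq0.
have r2 : Num.sqrt 11 ^+ 2 = 11 :> R by rewrite sqr_sqrtr.
have Hs1' : forall x, x \in X1 -> sqnorm x = 1.
  by move=> x Hx; move: (allP Hs1 x Hx) => /eqP ->; rewrite expr1n.
have Hs2' : forall x, x \in X2 -> sqnorm x = 11.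
  by move=> x Hx; move: (allP Hs2 x Hx) => /eqP ->.
have catS : forall (s t : seq 'rV[R]_23) (F : 'rV[R]_23 -> R),
  \sum_(z <- s ++ t) F z = \sum_(z <- s) F z + \sum_(z <- t) F z by move=> *; rewrite big_cat.
rewrite !catS !block_sum !block_sumN avg23 mdeg23.
rewrite mdeg23 in Hdeg.
set a' := split22 a; set j := mdeg a'; set k := a ord_max.
set S1 := \sum_(x <- X1) mono_eval a' x; set S2 := \sum_(x <- X2) mono_eval a' x.
set A := sphere_mono_avg R a'.
have Hodd : odd j -> A = 0 by move=> Ho; rewrite /A avg_odd_deg.
have [Ho|Hev] := boolP (odd (j + k)).
  rewrite -signr_odd Ho expr1 /Fjk.
  have Hj : odd k = false -> odd j by move=> Hk; move: Ho; rewrite oddD Hk addbF.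
  have A0 := Hodd; clearbody W1 W2 S1 S2 A j k s5 a'.
  case: ifP => Hk; first by rewrite !mulr0; ring.
  rewrite A0 ?Hj //; ring.
rewrite -signr_odd (negbTE Hev) expr0.
have Hjk : (j + k <= 6)%N.
  by move: Hdeg Hev; rewrite leq_eqVlt ltnS => /orP [/eqP ->|] //.
rewrite !pow2 // s52 s352.
have rjA : Num.sqrt 11 ^+ j * A = 11 ^+ (j./2) * A.
  have [Hj|Hj] := boolP (odd j); first by rewrite Hodd // !mulr0.
  by rewrite (pow_even r2 Hj).
have H1 : 99 / 275 * S1 + S2 / 2025 = (99 + 11 ^+ j./2) * A.
  have := Hd [:: (1, a')]; rewrite /pdeg_le /= andbT.
  move=> /(_ (leq_trans (leq_addr k j) Hjk)).
  rewrite !avg_single big_cat.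
  rewrite (eq_bigr (fun x => w x * mono_eval a' x)); last by move=> x _; rewrite peval_single.
  rewrite [X in _ = _ + X](eq_bigr (fun x => w x * mono_eval a' x)); last by move=> x _; rewrite peval_single.
  rewrite (sum_weighted _ Hw1) (sum_weighted _ Hw2) -/S1 -/S2 -/A expr1n rjA => H.
  clearbody W1 W2 S1 S2 A j k s5 a'.
  apply: (mulfI W2n0); transitivity (W1 / 275 * S1 + W2 / 2025 * S2); first by rewrite E; ring.
  by rewrite -H E; ring.
have H2 : (j <= 4)%N -> 99 / 275 * S1 + 11 * S2 / 2025 = (99 + 11 ^+ (j./2).+1) * A.
  move=> Hj4.
  have := Hd (mmul (usq R 22) [:: (1, a')]).
  move=> /(_ (hom_pdeg (hom_mul (hom_usq R 22) (hom_single a')) _)).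
  rewrite (_ : (2 + mdeg a' <= 6)%N = true); last by apply/idP; rewrite -/j; exact: (leq_add (leqnn 2) Hj4).
  move=> /(_ isT).
  rewrite !(avg_usq_single _ _ (erefl : (0 < 22)%N)) big_cat.
  rewrite (eq_bigr (fun x => w x * (sqnorm x * mono_eval a' x))); last by move=> x _; rewrite peval_usq_single.
  rewrite [X in _ = _ + X](eq_bigr (fun x => w x * (sqnorm x * mono_eval a' x))); last by move=> x _; rewrite peval_usq_single.
  rewrite (sum_weighted2 _ Hw1 Hs1') (sum_weighted2 _ Hw2 Hs2') -/S1 -/S2 -/A expr1n -/j exprD r2 -mulrA rjA => H.
  clearbody W1 W2 S1 S2 A j k s5 a'.
  apply: (mulfI W2n0); transitivity (W1 / 275 * 1 * S1 + W2 / 2025 * 11 * S2); first by rewrite E; ring.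
  by rewrite -H E exprS; ring.
have := NL Hjk Hev H1 H2 Hodd.
clearbody W1 W2 S1 S2 A j k s5 a'.
move=> HN; rewrite -HN; ring.
Qed.

End M.


Section F.
Variable R : rcfType.

Definition lastc (z : 'rV[R]_23) := z ord0 ord_max.

Lemma last_pos (X : seq 'rV[R]_22) al be z : z \in [seq ext23 x al be | x <- X] -> lastc z = be.
Proof. by move=> /mapP [x _ ->]; rewrite /lastc ext23_last. Qed.

Lemma last_neg (X : seq 'rV[R]_22) al be z : z \in [seq - ext23 x al be | x <- X] -> lastc z = - be.
Proof. by move=> /mapP [x _ ->]; rewrite /lastc mxE ext23_last. Qed.

Lemma nohas (s t : seq 'rV[R]_23) v :
  (forall z, z \in s -> lastc z = v) -> (forall z, z \in t -> lastc z != v) -> ~~ has (mem s) t.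
Proof.
move=> H1 H2; apply/hasPn => z Hz; apply/negP => Hs.
by move: (H2 z Hz); rewrite (H1 z Hs) eqxx.
Qed.

Lemma ext_inj (al be : R) : al != 0 -> injective (fun x : 'rV[R]_22 => ext23 x al be).
Proof.
move=> Ha x y /= H; apply/rowP => i.
have := congr1 (fun z : 'rV[R]_23 => z ord0 (widen_ord (leqnSn 22) i)) H.
rewrite /= !ext23_w => /(mulfI Ha).
by have -> : (0 : 'I_1) = ord0 by apply: val_inj.
Qed.

Lemma next_inj (al be : R) : al != 0 -> injective (fun x : 'rV[R]_22 => - ext23 x al be).
Proof. by move=> Ha x y /= /oppr_inj /(ext_inj Ha). Qed.

End F.

Unset Implicit Arguments.

Theorem mainTheorem9 (R : rcfType) (X1 X2 : seq 'rV[R]_22) (w : 'rV[R]_22 -> R) :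
  euclidean_design 6 [:: (1, X1); (Num.sqrt 11, X2)] w ->
  size (X1 ++ X2) = 'C(25, 3) ->
  size X1 = 275%N -> size X2 = 2025%N ->
  let a1 := 2 / Num.sqrt 5 in
  let b1 := 1 / Num.sqrt 5 in
  let a2 := 2 / (3 * Num.sqrt 5) in
  let b2 := 1 / (3 * Num.sqrt 5) in
  let Z := [seq ext23 x a1 b1 | x <- X1] ++ [seq ext23 x a2 b2 | x <- X2]
        ++ [seq - ext23 x a1 b1 | x <- X1] ++ [seq - ext23 x a2 b2 | x <- X2] in
  size Z = 4600%N /\ tight_spherical_design 3 Z.
Proof.
move=> Hdes Hsz Hn1 Hn2 a1 b1 a2 b2 Z.
have HZs : size Z = 4600%N by rewrite /Z !size_cat !size_map Hn1 Hn2.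
have [HU /andP [Hs1 Hs2] Hw Hd] := unpack Hdes.
have s5p : 0 < Num.sqrt 5 :> R by rewrite sqrtr_gt0.
have s52 : Num.sqrt 5 ^+ 2 = 5 :> R by rewrite sqr_sqrtr.
have s5n0 : Num.sqrt 5 != 0 :> R by rewrite gt_eqF.
have s3n0 : 3 * Num.sqrt 5 != 0 :> R by rewrite mulf_neq0 // pnatr_eq0.
have b1p : 0 < b1 by rewrite /b1 divr_gt0.
have b2e : b1 = 3 * b2 by rewrite /b1 /b2; field; rewrite s5n0.
have b2p : 0 < b2 by rewrite /b2 divr_gt0 // mulr_gt0.
have a1n0 : a1 != 0 by rewrite /a1 mulf_neq0 // ?invr_eq0 // pnatr_eq0.
have a2n0 : a2 != 0 by rewrite /a2 mulf_neq0 // ?invr_eq0 // pnatr_eq0.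
split => //; split; last by rewrite HZs.
split.
- by rewrite -size_eq0 HZs.
- move: HU; rewrite cat_uniq => /and3P [U1 _ U2].
  rewrite /Z !cat_uniq !map_inj_uniq ?U1 ?U2 //=; last 4 first.
  + exact: next_inj.
  + exact: next_inj.
  + exact: ext_inj.
  + exact: ext_inj.
  apply/and3P; split.
  + apply: (nohas (v := b1)) => [z /last_pos //|z]; rewrite !mem_cat => /or3P [/last_pos|/last_neg|/last_neg] ->;
      apply/eqP; lra.
  + apply: (nohas (v := b2)) => [z /last_pos //|z]; rewrite !mem_cat => /orP [/last_neg|/last_neg] ->;
      apply/eqP; lra.
  + rewrite andbT; apply: (nohas (v := - b1)) => [z /last_neg //|z /last_neg ->]; apply/eqP; lra.

- rewrite /Z !all_cat !all_map; apply/and4P; split; apply/allP => x Hx /=;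
    rewrite /on_sphere ?sqnorm_neg sqnorm_ext23 expr1n.
  + move: (allP Hs1 x Hx); rewrite /on_sphere expr1n => /eqP ->.
    by apply/eqP; rewrite /a1 /b1 !expr_div_n s52; field.
  + move: (allP Hs2 x Hx); rewrite /on_sphere sqr_sqrtr // => /eqP ->.
    by apply/eqP; rewrite /a2 /b2 !expr_div_n exprMn s52; field.
  + move: (allP Hs1 x Hx); rewrite /on_sphere expr1n => /eqP ->.
    by apply/eqP; rewrite /a1 /b1 !expr_div_n s52; field.
  + move: (allP Hs2 x Hx); rewrite /on_sphere sqr_sqrtr // => /eqP ->.
    by apply/eqP; rewrite /a2 /b2 !expr_div_n exprMn s52; field.
- move=> p Hp; rewrite HZs /sphere_avg_r.
  rewrite /peval exchange_big /= big_distrl /=; apply: eq_big_seq => m Hm.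
  rewrite -big_distrr /= expr1n mulr1.
  have Hdeg : (mdeg m.2 <= 7)%N by move: (allP Hp m Hm).
  by rewrite /Z /a1 /b1 /a2 /b2 (key Hdes Hn1 Hn2 Hdeg); field.
Qed.
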